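(* A finite simple graph $G$ is chordal, claw-free, and tent-free if and only if it is strongly chordal and claw-free.
   Context: A graph is chordal if it has no induced cycle of length at least $4$. A perfect elimination order of $G$ is an ordering $v_1,\dots,v_n$ of the vertices such that whenever $v_iv_j,v_iv_k\in E(G)$ with $i<j,k$, then $v_jv_k\in E(G)$. A strong elimination order is a perfect elimination order such that whenever $v_iv_k, v_kv_j, v_iv_\ell\in E(G)$ with $i<k<\ell$ and $i<j$, then $v_jv_\ell\in E(G)$. $G$ is strongly chordal if it has a strong elimination order. The claw is $K_{1,3}$. The tent is the graph with vertices $v_1,v_2,v_3,w_1,w_2,w_3$, edges $v_1v_2,v_1v_3,v_2v_3$, and $w_1v_1,w_1v_2,w_2v_2,w_2v_3,w_3v_3,w_3v_1$. ''$H$-free'' means having no induced subgraph isomorphic to $H$. *)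

(* Defs.v *)
From mathcomp Require Import all_boot.
Set Implicit Arguments. Unset Strict Implicit. Unset Printing Implicit Defensive.

Definition simple_graph (T : finType) (e : rel T) : Prop :=
  symmetric e /\ irreflexive e.

Definition induced_sub (V T : finType) (h : rel V) (e : rel T) : Prop :=
  exists f : V -> T, injective f /\ forall a b, e (f a) (f b) = h a b.

Definition free_of (V T : finType) (h : rel V) (e : rel T) : Prop :=
  ~ induced_sub h e.

Definition cycle_rel (k : nat) : rel 'I_k :=
  fun i j => (j == (i.+1 %% k) :> nat) || (i == (j.+1 %% k) :> nat).

Definition chordal (T : finType) (e : rel T) : Prop :=
  forall k : nat, (4 <= k)%N -> free_of (@cycle_rel k) e.

Definition claw_rel : rel 'I_4 :=
  fun i j => ((i == 0 :> nat) && (j != 0 :> nat)) || ((j == 0 :> nat) && (i != 0 :> nat)).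

(* Tent: v1,v2,v3 = 0,1,2 (a triangle), w1,w2,w3 = 3,4,5;
   w1 ~ v1,v2 ; w2 ~ v2,v3 ; w3 ~ v3,v1. *)
Definition tent_edges : seq (nat * nat) :=
  [:: (0,1); (0,2); (1,2); (3,0); (3,1); (4,1); (4,2); (5,2); (5,0)].
Definition tent_rel : rel 'I_6 :=
  fun i j => ((i : nat, j : nat) \in tent_edges) || ((j : nat, i : nat) \in tent_edges).

Definition vertex_order (T : finType) (s : seq T) : Prop :=
  uniq s /\ forall v : T, v \in s.

Definition perfect_elim_order (T : finType) (e : rel T) (s : seq T) : Prop :=
  vertex_order s /\
  forall vi vj vk : T, index vi s < index vj s -> index vi s < index vk s ->
    e vi vj -> e vi vk -> vj != vk -> e vj vk.

Definition strong_elim_order (T : finType) (e : rel T) (s : seq T) : Prop :=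
  perfect_elim_order e s /\
  forall vi vj vk vl : T,
    index vi s < index vk s -> index vk s < index vl s -> index vi s < index vj s ->
    e vi vk -> e vk vj -> e vi vl -> vj != vl -> e vj vl.

Definition strongly_chordal (T : finType) (e : rel T) : Prop :=
  exists s : seq T, strong_elim_order e s.

(* Main.v *)
Require Import Defs.
From mathcomp Require Import all_boot zify.
Set Implicit Arguments. Unset Strict Implicit. Unset Printing Implicit Defensive.

Definition cr (k i j : nat) := (j == i.+1 %% k) || (i == j.+1 %% k).

Lemma crel_nat (k a b : nat) : 2 < k -> a < b -> b < k ->
  ((b == a.+1 %% k) || (a == b.+1 %% k)) = (b == a.+1) || ((a == 0) && (b == k.-1)).
Proof.
move=> hk hab hb.
rewrite (modn_small (_ : a.+1 < k)); last lia.
case: (ltngtP b.+1 k) => h.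
- rewrite (modn_small h).
  have -> : (a == b.+1) = false by apply/eqP; lia.
  have -> : (b == k.-1) = false by apply/eqP; lia.
  by rewrite andbF !orbF.
- lia.
- rewrite -h modnn.
  have -> : (b == b.+1.-1) = true by apply/eqP.
  by rewrite andbT.
Qed.

Lemma cr_sym k i j : cr k i j = cr k j i.
Proof. by rewrite /cr orbC. Qed.

Lemma cr_lt k a b : 2 < k -> a < b -> b < k -> cr k a b = (b == a.+1) || ((a == 0) && (b == k.-1)).
Proof. exact: crel_nat. Qed.

Lemma nbrs (k a : nat) : 3 < k -> a < k ->
  exists b c, [/\ b < k, c < k, b != c, cr k a b && cr k a c & ~~ cr k b c].
Proof.
move=> hk ha.
have hk2 : 2 < k by lia.
case: (posnP a) => [->|ha0].
  exists 1, k.-1; split; try lia.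
  - rewrite !cr_lt; lia.
  - rewrite !cr_lt; lia.
case: (boolP (a == k.-1)) => [/eqP hak|hak].
  exists k.-2, 0; split; try lia.
  - rewrite !(cr_sym k a) !cr_lt; lia.
  - rewrite cr_sym cr_lt; lia.
exists a.-1, a.+1; split; try lia.
- rewrite [cr k a a.-1]cr_sym !cr_lt; lia.
- rewrite cr_lt; lia.
Qed.

Lemma tent_comb (I : 'I_6 -> nat) (a : 'I_6) :
  (forall j, j != a -> I a < I j) ->
  (forall j k, j != k -> I j != I k) ->
  (forall j k, I a < I j -> I a < I k -> tent_rel a j -> tent_rel a k -> j != k ->
     ~~ tent_rel j k -> False) ->
  (forall k l j, I a < I k -> I k < I l -> I a < I j -> tent_rel a k -> tent_rel k j ->
     tent_rel a l -> j != l -> ~~ tent_rel j l -> False) -> False.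
Proof.
move=> lt inj P Q.
pose o0 := @Ordinal 6 0 isT. pose o1 := @Ordinal 6 1 isT. pose o2 := @Ordinal 6 2 isT.
pose o3 := @Ordinal 6 3 isT. pose o4 := @Ordinal 6 4 isT. pose o5 := @Ordinal 6 5 isT.
have d01 : o0 != o1 by []. have d12 : o1 != o2 by []. have d20 : o2 != o0 by [].
case: a lt P Q => [[|[|[|[|[|[|m]]]]]] hm] lt P Q //.
- by apply: (P o3 o5) => //; apply: lt.
- by apply: (P o3 o4) => //; apply: lt.
- by apply: (P o4 o5) => //; apply: lt.
- case: (ltngtP (I o0) (I o1)) => h.
  + by apply: (Q o0 o1 o5) => //; apply: lt.
  + by apply: (Q o1 o0 o4) => //; apply: lt.
  + by move: (inj o0 o1 d01); rewrite h eqxx.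
- case: (ltngtP (I o1) (I o2)) => h.
  + by apply: (Q o1 o2 o3) => //; apply: lt.
  + by apply: (Q o2 o1 o5) => //; apply: lt.
  + by move: (inj o1 o2 d12); rewrite h eqxx.
- case: (ltngtP (I o2) (I o0)) => h.
  + by apply: (Q o2 o0 o4) => //; apply: lt.
  + by apply: (Q o0 o2 o3) => //; apply: lt.
  + by move: (inj o2 o0 d20); rewrite h eqxx.
Qed.

Lemma crel_diag (k a : nat) : 2 < k -> a < k -> ((a == a.+1 %% k) || (a == a.+1 %% k)) = false.
Proof.
move=> hk ha; rewrite orbb.
case: (ltngtP a.+1 k) => h.
- rewrite (modn_small h); apply/eqP; lia.
- lia.
- rewrite -h modnn; apply/eqP; lia.
Qed.

Section Easy.
Variable T : finType.
Variable e : rel T.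

Lemma idx_eq (s : seq T) x y : x \in s -> index x s = index y s -> x = y.
Proof.
move=> hx h.
have hy : y \in s by rewrite -index_mem -h index_mem.
by rewrite -(nth_index x hx) h nth_index.
Qed.

Lemma strong_chordal s : perfect_elim_order e s -> chordal e.
Proof.
move=> [[hu hall] hpeo] k hk [f [finj htab]].
have hk0 : 0 < k by lia.
case: (@arg_minnP _ (Ordinal hk0) xpredT (fun i => index (f i) s) isT) => a _ hmin.
have [b [c [hb hc hbc /andP [hab hac] nbc]]] := nbrs hk (ltn_ord a).
have lt : forall j : 'I_k, j != a -> index (f a) s < index (f j) s.
  move=> j hj; rewrite ltn_neqAle hmin // andbT.
  apply/eqP => h; move/eqP: hj; apply; apply: finj; apply: esym; exact: idx_eq (hall _) h.
have hk2 : 2 < k by lia.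
have hba : Ordinal hb != a.
  apply/eqP => h; move: hab; rewrite -h /= /cr crel_diag //.
have hca : Ordinal hc != a.
  apply/eqP => h; move: hac; rewrite -h /= /cr crel_diag //.
have hfbc : f (Ordinal hb) != f (Ordinal hc).
  by apply/eqP => /finj /(congr1 val) /= /eqP; rewrite (negbTE hbc).
have := hpeo (f a) (f (Ordinal hb)) (f (Ordinal hc)) (lt _ hba) (lt _ hca).
rewrite !htab /cycle_rel /=.
move/(_ hab hac hfbc); rewrite /cr in nbc; by rewrite (negbTE nbc).
Qed.

Lemma strong_tentfree s : strong_elim_order e s -> free_of tent_rel e.
Proof.
move=> [[[hu hall] hpeo] hsc] [f [finj htab]].
case: (@arg_minnP _ (@Ordinal 6 0 isT) xpredT (fun i => index (f i) s) isT) => a _ hmin.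
have inj : forall j k, j != k -> index (f j) s != index (f k) s.
  move=> j k hjk; apply/eqP => h; move/eqP: hjk; apply; apply: finj; exact: idx_eq (hall _) h.
have lt : forall j : 'I_6, j != a -> index (f a) s < index (f j) s.
  move=> j hj; rewrite ltn_neqAle hmin // andbT; rewrite eq_sym in hj; exact: inj.
apply: (@tent_comb (fun i => index (f i) s) a lt inj).
- move=> j k h1 h2 t1 t2 hjk nt.
  have hf : f j != f k by apply: contra hjk => /eqP /finj ->.
  have := hpeo (f a) (f j) (f k) h1 h2; rewrite !htab t1 t2 => /(_ isT isT hf).
  by rewrite (negbTE nt).
- move=> k l j h1 h2 h3 t1 t2 t3 hjl nt.
  have hf : f j != f l by apply: contra hjl => /eqP /finj ->.
  have := hsc (f a) (f j) (f k) (f l) h1 h2 h3; rewrite !htab t1 t2 t3 => /(_ isT isT isT hf).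
  by rewrite (negbTE nt).
Qed.

End Easy.

Section G.
Variable T : finType.
Variable e : rel T.
Hypothesis esym : symmetric e.
Hypothesis eirr : irreflexive e.

Lemma e_neq x y : e x y -> x != y.
Proof. by apply: contraTneq => ->; rewrite eirr. Qed.

Lemma cycle_contra (k : nat) (c : nat -> T) :
  chordal e -> 4 <= k ->
  (forall i j, i < j < k -> c i != c j) ->
  (forall i j, i < j < k -> e (c i) (c j) = (j == i.+1) || ((i == 0) && (j == k.-1))) ->
  False.
Proof.
move=> hch hk hinj htab.
apply: (hch k hk).
exists (fun x : 'I_k => c x); split.
- move=> a b hab; apply/val_inj => /=.
  case: (ltngtP a b) => // h.
  + by move: (hinj a b); rewrite h ltn_ord hab eqxx => /(_ isT).
  + by move: (hinj b a); rewrite h ltn_ord hab eqxx => /(_ isT).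
- move=> a b; rewrite /cycle_rel /=.
  case: (ltngtP a b) => h.
  + by rewrite htab ?h ?ltn_ord // crel_nat ?ltn_ord //; lia.
  + by rewrite esym htab ?h ?ltn_ord // [in RHS]orbC crel_nat ?ltn_ord //; lia.
  + have -> : a = b by apply/val_inj.
    rewrite eirr crel_diag ?ltn_ord //; last lia.
Qed.


Definition gpath (D : {set T}) (g : nat -> T) (m : nat) :=
  (forall i, i <= m -> e (g i) (g i.+1)) /\ (forall i, 0 < i <= m -> g i \in D).
Definition chl (g : nat -> T) (m : nat) :=
  forall i j, i < j <= m.+1 -> e (g i) (g j) -> j = i.+1 \/ (i = 0 /\ j = m.+1).

Lemma shortest D m g : 0 < m -> gpath D g m ->
  exists m' g', [/\ 0 < m', gpath D g' m', g' 0 = g 0, g' m'.+1 = g m.+1 & chl g' m'].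
Proof.
elim/ltn_ind: m g => m IH g hm [hge hgD].
have [H|H] := boolP [exists i : 'I_(m.+2), exists j : 'I_(m.+2),
   [&& i < j, e (g i) (g j), j != i.+1 :> nat & ~~ ((i == 0 :> nat) && (j == m.+1 :> nat))]].
- case/existsP: H => [[i hi]] /existsP [[j hj]] /= /and4P [hij hij' hne hnot].
  pose d := j - i.+1.
  pose g' := fun l => if l <= i then g l else g (l + d).
  have hd : 0 < d by rewrite /d; move/eqP: hne => hne; lia.
  have hm' : m - d < m by lia.
  have [||m'' [g'' [h1 h2 h3 h4 h5]]] := IH (m - d) hm' g'.
  + case/nandP: hnot => /eqP hh; rewrite /d; lia.
  + split.
    * move=> l hl; rewrite /g' /=.
      case: (ltngtP l i) => hli.
      - apply: hge; lia.
      - have -> : l.+1 + d = (l + d).+1 by lia.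
        apply: hge; lia.
      - subst l.
        have -> : i.+1 + d = j by rewrite /d; lia.
        exact: hij'.
    * move=> l hl; rewrite /g' /=; case: ifP => hli; apply: hgD; lia.
  + exists m'', g''; split => //.
    * rewrite h4 /g' /= ifN; last lia.
      congr g; rewrite /d; case/nandP: hnot => /eqP hh; lia.
- exists m, g; split => //.
  move=> i j hij hE.
  case: (boolP (j == i.+1)) => [/eqP|] hji; first by left.
  right.
  have hi : i < m.+2 by lia.
  have hj : j < m.+2 by lia.
  case: (boolP ((i == 0) && (j == m.+1))) => [/andP [/eqP -> /eqP ->]|hn]; first by [].
  exfalso; move/negP: H; apply.
  apply/existsP; exists (Ordinal hi); apply/existsP; exists (Ordinal hj) => /=.
  apply/and4P; split => //; lia.
Qed.

Lemma gp_inj D m g : gpath D g m -> chl g m -> g 0 \notin D -> g m.+1 \notin D ->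
  g 0 != g m.+1 -> forall i j, i < j <= m.+1 -> g i != g j.
Proof.
move=> [hge hgD] hc h0 hm hne i j hij; apply/eqP => E.
case: (posnP i) => hi.
- subst i.
  case: (ltngtP j m.+1) => hj; last 1 first.
  + by subst j; rewrite E eqxx in hne.
  + have : g j \in D by apply: hgD; lia.
    by rewrite -E (negbTE h0).
  + lia.
- have hiD : g i \in D by apply: hgD; lia.
  case: (ltngtP j m.+1) => hj; last 1 first.
  + by subst j; rewrite -E hiD in hm.
  + case: (boolP (j == i.+1)) => [/eqP hj1|hj1].
    * by subst j; move: (hge i (ltnW hj)); rewrite -E eirr.
    * have := hge j (hj : j <= m); rewrite -E => /(hc i j.+1).
      by case; lia.
  + lia.
Qed.

Lemma pq_contra D m g n h : chordal e -> 0 < m -> gpath D g m -> chl g m ->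
  g 0 \notin D -> g m.+1 \notin D -> g 0 != g m.+1 ->
  0 < n -> h 0 = g m.+1 -> h n = g 0 -> (forall i, i < n -> e (h i) (h i.+1)) ->
  (forall i j, i < j <= n -> e (h i) (h j) -> j = i.+1) ->
  (forall i j, i < j <= n -> h i != h j) ->
  (forall i, 0 < i < n -> h i \notin D /\ forall y, y \in D -> ~~ e (h i) y) ->
  m + n <= 2.
Proof.
move=> hch hm hg hc h0 hm1 hne hn hh0 hhn hhe hhc hhi hhD.
have hginj := gp_inj hg hc h0 hm1 hne.
case: hg => hge hgD.
rewrite leqNgt; apply/negP => hmn.
pose c := fun i => if i <= m then g i else h (i - m.+1).
have hst : e (g 0) (g m.+1) = (n == 1).
  case: (ltngtP n 1) => hn1; first lia.
  - apply/negP => hE.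
    have := hhc 0 n; rewrite hh0 hhn esym => /(_ _ hE); lia.
  - by subst n; rewrite -hh0 -hhn esym hhe.
apply: (@cycle_contra (m.+1 + n) c hch); first lia.
- move=> i j hij; rewrite /c.
  case: (leqP j m) => hj.
  + rewrite ifT; last lia. apply: hginj; lia.
  case: (leqP i m) => hi.
  + case: (posnP (j - m.+1)) => hj0.
    * have -> : j - m.+1 = 0 by [].
      rewrite hh0; apply: hginj; lia.
    * have [hD _] := hhD (j - m.+1) (ltac:(lia)).
      case: (posnP i) => hi0.
      - subst i; rewrite -hhn [_ == _]eq_sym; apply: hhi; lia.
      - have : g i \in D by apply: hgD; lia.
        by apply: contraTneq => ->.
  + apply: hhi; lia.
- move=> i j hij; rewrite /c.
  case: (leqP j m) => hj.
  + rewrite ifT; last lia.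
    have -> : (i == 0) && (j == (m.+1 + n).-1) = false by apply/negP => /andP [_ /eqP]; lia.
    rewrite orbF.
    case: (boolP (j == i.+1)) => [/eqP ->|hji]; first by apply: hge; lia.
    apply/negP => hE; have := hc i j (ltac:(lia)) hE; lia.
  case: (leqP i m) => hi.
  + case: (posnP (j - m.+1)) => hj0.
    * have hjm : j = m.+1 by lia.
      rewrite hj0 hh0 hjm eqSS.
      case: (boolP (i == m)) => [/eqP ->|him]; first by rewrite hge ?eqxx.
      case: (posnP i) => hi0.
      - subst i; rewrite hst /=.
        have -> : (m == 0) = false by apply/eqP; lia.
        by apply/eqP/eqP; lia.
      - have -> : (m == i) = false by apply/eqP; lia.
        rewrite /=.
        apply/negP => hE; have := hc i m.+1 (ltac:(lia)) hE; case; lia.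
    * have [hD hDn] := hhD (j - m.+1) (ltac:(lia)).
      case: (posnP i) => hi0.
      - subst i; rewrite -hhn esym /=.
        case: (boolP (j == (m.+1 + n).-1)) => hjK.
        + have -> : n = (j - m.+1).+1 by lia.
          by rewrite orbT; apply: hhe; lia.
        + rewrite orbF; have -> : (j == 1) = false by apply/eqP; lia.
          apply/negP => hE; have := hhc (j - m.+1) n (ltac:(lia)) hE; lia.
      - have hgi : g i \in D by apply: hgD; lia.
        rewrite esym (negbTE (hDn _ hgi)).
        have -> : (j == i.+1) = false by apply/eqP; lia.
        by [].
  + have -> : (i == 0) = false by apply/eqP; lia.
    rewrite andFb orbF.
    case: (boolP (j == i.+1)) => [/eqP hji|hji].
    * have -> : j - m.+1 = (i - m.+1).+1 by lia.
      apply: hhe; lia.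
    * apply/negP => hE; have := hhc (i - m.+1) (j - m.+1) (ltac:(lia)) hE; lia.
Qed.

Definition rin (D : {set T}) : rel T := fun x y => [&& x \in D, y \in D & e x y].
Definition econ D := connect (rin D).

Lemma rin_sym D : symmetric (rin D).
Proof. by move=> x y; rewrite /rin esym andbA [(x \in D) && _]andbC -andbA. Qed.

Lemma econ_sym D x y : econ D x y = econ D y x.
Proof. exact: (sym_connect_sym (@rin_sym D)). Qed.

Lemma econ_ind D u (P : T -> Prop) : P u ->
  (forall y z, P y -> econ D u y -> y \in D -> z \in D -> e y z -> P z) ->
  forall w, econ D u w -> P w.
Proof.
move=> Pu step w /connectP [p hp ->].
suff H : forall p x, P x -> econ D u x -> path (rin D) x p -> P (last x p).
  by apply: (H p u Pu (connect0 _ _) hp).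
elim => [|y q IH] x Px hx //= /andP [hxy hq].
have hxy' := hxy; case/and3P: hxy' => hx1 hy1 he.
apply: IH hq; first exact: step Px hx hx1 hy1 he.
exact: connect_trans hx (connect1 hxy).
Qed.

Lemma econ_mem (D : {set T}) a w : a \in D -> econ D a w -> w \in D.
Proof. by move=> ha; apply: (econ_ind (P := fun w => w \in D)).  Qed.

Lemma path_exists (D : {set T}) s t a b : a \in D -> e s a -> econ D a b -> e b t ->
  exists m g, [/\ 0 < m, gpath D g m, g 0 = s & g m.+1 = t].
Proof.
move=> ha hsa hab hbt.
pose P := fun w => exists m g, [/\ 0 < m, g 0 = s, g m = w,
   (forall i, i < m -> e (g i) (g i.+1)) & (forall i, 0 < i <= m -> g i \in D)].
have : P b.
  apply: (econ_ind (P:=P)) hab.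
  - exists 1, (fun i => if i is 0 then s else a); split => //.
    + by case.
    + by case => [|[|]].
  - move=> y z [m [g [h1 h2 h3 h4 h5]]] _ hy hz hyz.
    exists m.+1, (fun i => if i <= m then g i else z); split => //.
    + by rewrite ltnn.
    + move=> i hi; case: (ltngtP i m) => hh.
      * by apply: h4.
      * lia.
      * by rewrite hh h3.
    + move=> i hi; case: ifP => hh //; apply: h5; lia.
case=> m [g [h1 h2 h3 h4 h5]].
exists m, (fun i => if i <= m then g i else t); split => //.
- split.
  + move=> i hi; case: (ltngtP i m) => hh.
    * by apply: h4.
    * lia.
    * by rewrite hh h3.
  + move=> i hi; rewrite ifT; [apply: h5|]; lia.
- by rewrite ltnn.
Qed.

Lemma common_nb (D : {set T}) s t a b : chordal e -> s \notin D -> t \notin D -> s != t -> e s t ->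
  a \in D -> b \in D -> e s a -> e t b -> econ D a b ->
  exists2 r, r \in D & e s r && e t r.
Proof.
move=> hch hs ht hst est ha hb hsa htb hab.
have hbt : e b t by rewrite esym.
have [m [g [hm hg hg0 hgm]]] := path_exists ha hsa hab hbt.
have [m' [g' [hm' hg' hg0' hgm' hc']]] := shortest hm hg.
rewrite hg0 in hg0'; rewrite hgm in hgm'.
have hle : m' + 1 <= 2.
  apply: (@pq_contra D m' g' 1 (fun i => if i == 0 then t else s) hch hm' hg' hc').
  - by rewrite hg0'.
  - by rewrite hgm'.
  - by rewrite hg0' hgm'.
  - by [].
  - by rewrite hgm'.
  - by rewrite hg0'.
  - by move=> [|i] //= _; rewrite esym.
  - move=> i j hij _; move: hij; clear; lia.
  - move=> i j hij; have [-> ->] : i = 0 /\ j = 1 by move: hij; clear; lia.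
    by rewrite /= eq_sym.
  - move=> i hi; exfalso; move: hi; clear; lia.
have hm1 : m' = 1 by move: hle hm'; clear; lia.
subst m'; case: hg' => hge hgD.
exists (g' 1); first by apply: hgD.
by rewrite -{1}hg0' hge //= -hgm' esym hge.
Qed.

Lemma two_side (D1 D2 : {set T}) s t a1 b1 a2 b2 : chordal e ->
  s \notin D1 -> t \notin D1 -> s \notin D2 -> t \notin D2 -> s != t -> ~~ e s t ->
  [disjoint D1 & D2] -> (forall x y, x \in D1 -> y \in D2 -> ~~ e x y) ->
  a1 \in D1 -> e s a1 -> econ D1 a1 b1 -> e b1 t ->
  a2 \in D2 -> e t a2 -> econ D2 a2 b2 -> e b2 s -> False.
Proof.
move=> hch hs1 ht1 hs2 ht2 hst nst hdis hne ha1 hsa1 hab1 hbt1 ha2 hta2 hab2 hbs2.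
have [m [g [hm hg hg0 hgm]]] := path_exists ha1 hsa1 hab1 hbt1.
have [m' [g' [hm' hg' hg0' hgm' hc']]] := shortest hm hg.
rewrite hg0 in hg0'; rewrite hgm in hgm'.
have [n [k [hn hk hk0 hkn]]] := path_exists ha2 hta2 hab2 hbs2.
have [n' [k' [hn' hk' hk0' hkn' hck']]] := shortest hn hk.
rewrite hk0 in hk0'; rewrite hkn in hkn'.
have hkinj := gp_inj hk' hck'.
rewrite hk0' hkn' in hkinj.
have hts : t != s by rewrite eq_sym.
have := hkinj ht2 hs2 hts.
move=> hkinj'.
have hle : m' + n'.+1 <= 2.
  apply: (@pq_contra D1 m' g' n'.+1 k' hch hm' hg' hc').
  - by rewrite hg0'.
  - by rewrite hgm'.
  - by rewrite hg0' hgm'.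
  - by [].
  - by rewrite hgm' hk0'.
  - by rewrite hg0' hkn'.
  - by move=> i hi; case: hk' => hke _; apply: hke.
  - move=> i j hij hE; have [] := hck' i j hij hE => // [[hi hj]].
    by move: hE; rewrite hi hj hk0' hkn' esym (negbTE nst).
  - exact: hkinj'.
  - move=> i hi; case: hk' => _ hkD.
    have hD : k' i \in D2 by apply: hkD; move: hi; clear; lia.
    split.
    + by apply: contraTN hD => hD1; rewrite (disjointFr hdis hD1).
    + by move=> y hy; rewrite esym; apply: hne.
move: hle hm' hn'; clear; lia.
Qed.

Lemma tab_full n (h : rel 'I_n) (f : 'I_n -> T) : symmetric h -> irreflexive h ->
  (forall a b : 'I_n, a < b -> e (f a) (f b) = h a b) -> forall a b, e (f a) (f b) = h a b.
Proof.
move=> hs hi htab a b; case: (ltngtP a b) => hh.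
- exact: htab.
- by rewrite esym hs; apply: htab.
- have -> : a = b by apply: val_inj.
  by rewrite eirr hi.
Qed.

Lemma small_induced n (h : rel 'I_n) (f : 'I_n -> T) : symmetric h -> irreflexive h ->
  (forall a b : 'I_n, a < b -> f a != f b) ->
  (forall a b : 'I_n, a < b -> e (f a) (f b) = h a b) -> induced_sub h e.
Proof.
move=> hs hi hinj htab; exists f; split; last exact: tab_full.
move=> a b hab; apply: val_inj.
case: (ltngtP a b) => // hh.
- by move: (hinj a b hh); rewrite hab eqxx.
- by move: (hinj b a hh); rewrite hab eqxx.
Qed.

Lemma table_inj n (h : rel 'I_n) (f : 'I_n -> T) : symmetric h -> irreflexive h ->
  (forall a b : 'I_n, a != b -> exists c, h a c != h b c) ->
  (forall a b : 'I_n, a < b -> e (f a) (f b) = h a b) -> forall a b : 'I_n, a < b -> f a != f b.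
Proof.
move=> hs hi htw htab a b hab; apply/eqP => E.
have hne : a != b by rewrite neq_ltn hab.
have [c hc] := htw a b hne.
by move: hc; rewrite -!(tab_full hs hi htab) E eqxx.
Qed.

Lemma claw_sym : symmetric claw_rel.
Proof. by do 2 case=> [[|[|[|[|?]]]] ?]. Qed.
Lemma claw_irr : irreflexive claw_rel.
Proof. by case=> [[|[|[|[|?]]]] ?]. Qed.
Lemma tent_sym : symmetric tent_rel.
Proof. by do 2 case=> [[|[|[|[|[|[|?]]]]]] ?]. Qed.
Lemma tent_irr : irreflexive tent_rel.
Proof. by case=> [[|[|[|[|[|[|?]]]]]] ?]. Qed.
Lemma tent_tw : forall a b : 'I_6, a != b -> exists c, tent_rel a c != tent_rel b c.
Proof.
move=> [[|[|[|[|[|[|?]]]]]] ?] [[|[|[|[|[|[|?]]]]]] ?] //= _;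
  first [ by exists (@Ordinal 6 0 isT) | by exists (@Ordinal 6 1 isT)
        | by exists (@Ordinal 6 2 isT) | by exists (@Ordinal 6 3 isT)
        | by exists (@Ordinal 6 4 isT) | by exists (@Ordinal 6 5 isT) ].
Qed.

Hypothesis hch : chordal e.
Hypothesis hclaw : free_of claw_rel e.
Hypothesis htent : free_of tent_rel e.

Lemma no_claw c l1 l2 l3 : e c l1 -> e c l2 -> e c l3 ->
  ~~ e l1 l2 -> ~~ e l1 l3 -> ~~ e l2 l3 -> l1 != l2 -> l1 != l3 -> l2 != l3 -> False.
Proof.
move=> h1 h2 h3 n12 n13 n23 d12 d13 d23.
have d1 := e_neq h1; have d2 := e_neq h2; have d3 := e_neq h3.
apply: hclaw; apply: (@small_induced 4 claw_rel (fun a : 'I_4 => nth c [:: c; l1; l2; l3] a)).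
- exact: claw_sym.
- exact: claw_irr.
- by move=> [[|[|[|[|?]]]] ?] [[|[|[|[|?]]]] ?] //= _.
- by move=> [[|[|[|[|?]]]] ?] [[|[|[|[|?]]]] ?] //= _; rewrite ?(negbTE n12) ?(negbTE n13) ?(negbTE n23).
Qed.

Lemma no_tent v1 v2 v3 w1 w2 w3 : e v1 v2 -> e v1 v3 -> e v2 v3 ->
  e w1 v1 -> e w1 v2 -> e w2 v2 -> e w2 v3 -> e w3 v3 -> e w3 v1 ->
  ~~ e w1 v3 -> ~~ e w2 v1 -> ~~ e w3 v2 -> ~~ e w1 w2 -> ~~ e w1 w3 -> ~~ e w2 w3 -> False.
Proof.
move=> a12 a13 a23 b11 b12 b22 b23 b33 b31 n13 n21 n32 m12 m13 m23.
pose f := fun a : 'I_6 => nth v1 [:: v1; v2; v3; w1; w2; w3] a.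
have htab : forall a b : 'I_6, a < b -> e (f a) (f b) = tent_rel a b.
  have a12' : e v2 v1 by rewrite esym.
  have a13' : e v3 v1 by rewrite esym.
  have a23' : e v3 v2 by rewrite esym.
  have b11' : e v1 w1 by rewrite esym.
  have b12' : e v2 w1 by rewrite esym.
  have b22' : e v2 w2 by rewrite esym.
  have b23' : e v3 w2 by rewrite esym.
  have b33' : e v3 w3 by rewrite esym.
  have b31' : e v1 w3 by rewrite esym.
  have n13' : ~~ e v3 w1 by rewrite esym.
  have n21' : ~~ e v1 w2 by rewrite esym.
  have n32' : ~~ e v2 w3 by rewrite esym.
  move=> [[|[|[|[|[|[|?]]]]]] ?] [[|[|[|[|[|[|?]]]]]] ?] //= _;
    rewrite /f /= ?(negbTE n13) ?(negbTE n21) ?(negbTE n32) ?(negbTE m12) ?(negbTE m13) ?(negbTE m23)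
      ?(negbTE n13') ?(negbTE n21') ?(negbTE n32') //.
apply: htent; apply: (@small_induced 6 tent_rel f tent_sym tent_irr _ htab).
exact: table_inj tent_sym tent_irr tent_tw htab.
Qed.

Lemma no_c4 x1 x2 x3 x4 : e x1 x2 -> e x2 x3 -> e x3 x4 -> e x4 x1 ->
  ~~ e x1 x3 -> ~~ e x2 x4 -> x1 != x3 -> x2 != x4 -> False.
Proof.
move=> h12 h23 h34 h41 n13 n24 d13 d24.
have d12 := e_neq h12; have d23 := e_neq h23; have d34 := e_neq h34.
have d14 : x1 != x4 by rewrite eq_sym; exact: e_neq h41.
have h14 : e x1 x4 by rewrite esym.
apply: (@cycle_contra 4 (fun i => nth x1 [:: x1; x2; x3; x4] i) hch) => //.
- by move=> [|[|[|[|i]]]] [|[|[|[|j]]]] //= /andP [].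
- move=> [|[|[|[|i]]]] [|[|[|[|j]]]] //=; try by case/andP.
  all: by move=> _; rewrite ?(negbTE n13) ?(negbTE n24).
Qed.

Definition nb (X : {set T}) u := [set w in X | e u w].
Definition cn (X : {set T}) u := u |: nb X u.

Record Sep (X S A B : {set T}) : Prop := {
  sepSX : S \subset X;
  sepAX : A \subset X :\: S;
  sepBX : B \subset X :\: S;
  sepAB : [disjoint A & B];
  sepAcl : forall a y, a \in A -> y \in X -> e a y -> y \in A :|: S;
  sepBcl : forall b y, b \in B -> y \in X -> e b y -> y \in B :|: S;
  sepAc : forall a b, a \in A -> b \in A -> econ A a b;
  sepBc : forall a b, a \in B -> b \in B -> econ B a b;
  sepSA : forall s, s \in S -> exists2 a, a \in A & e s a;
  sepSB : forall s, s \in S -> exists2 b, b \in B & e s b;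
  sepA0 : exists a, a \in A
}.

Lemma sepA_in X S A B a : Sep X S A B -> a \in A -> (a \in X) && (a \notin S).
Proof. by move=> hs /(subsetP (sepAX hs)); rewrite inE andbC. Qed.
Lemma sepB_in X S A B a : Sep X S A B -> a \in B -> (a \in X) && (a \notin S).
Proof. by move=> hs /(subsetP (sepBX hs)); rewrite inE andbC. Qed.

Lemma sep_noAB X S A B a b : Sep X S A B -> a \in A -> b \in B -> ~~ e a b.
Proof.
move=> hs ha hb; apply/negP => hab.
case/andP: (sepB_in hs hb) => hbX hbS.
have := sepAcl hs ha hbX hab; rewrite inE (negbTE hbS) orbF.
by rewrite (disjointFl (sepAB hs) hb).
Qed.

Lemma sep_clique X S A B s t : Sep X S A B -> s \in S -> t \in S -> s != t -> e s t.
Proof.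
move=> hs hsS htS hst; apply/negPn/negP => nst.
have [a1 ha1 hsa1] := sepSA hs hsS.
have [b1 hb1 htb1] := sepSA hs htS.
have [a2 ha2 hta2] := sepSB hs htS.
have [b2 hb2 hsb2] := sepSB hs hsS.
have nA : forall x, x \in S -> x \notin A.
  by move=> x hx; apply/negP => /(sepA_in hs); rewrite hx andbF.
have nB : forall x, x \in S -> x \notin B.
  by move=> x hx; apply/negP => /(sepB_in hs); rewrite hx andbF.
apply: (@two_side A B s t a1 b1 a2 b2 hch) => //; try by [apply: nA | apply: nB].
- exact: (sepAB hs).
- move=> x y hx hy; exact: sep_noAB hs hx hy.
- exact: (sepAc hs ha1 hb1).
- by rewrite esym.
- exact: (sepBc hs ha2 hb2).
- by rewrite esym.
Qed.

Lemma sep_common X S A B s t : Sep X S A B -> s \in S -> t \in S -> s != t ->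
  exists2 r, r \in B & e s r && e t r.
Proof.
move=> hs hsS htS hst.
have [a ha hsa] := sepSB hs hsS.
have [b hb htb] := sepSB hs htS.
have nB : forall x, x \in S -> x \notin B.
  by move=> x hx; apply/negP => /(sepB_in hs); rewrite hx andbF.
apply: (@common_nb B s t a b hch) => //; try by apply: nB.
- exact: sep_clique hs hsS htS hst.
- exact: (sepBc hs ha hb).
Qed.

Lemma full_helper (X S : {set T}) (w w' s : T) : S \subset X -> w \in X :\: S -> ~~ econ (X :\: S) w w' ->
  (forall S' : {set T}, S' \subset X -> w \notin S' -> w' \notin S' -> ~~ econ (X :\: S') w w' -> #|S| <= #|S'|) ->
  w' \notin S -> s \in S -> exists2 a, econ (X :\: S) w a & e s a.
Proof.
move=> hSX hw hnc hmin hw' hs.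
case: (boolP [exists a, econ (X :\: S) w a && e s a]) => [/existsP [a /andP [h1 h2]]|H].
  by exists a.
exfalso.
have hS' : ~~ econ (X :\: (S :\ s)) w w'.
  apply/negP => hc.
  have : econ (X :\: S) w w'; last by rewrite (negbTE hnc).
  apply: (econ_ind (P := fun z => econ (X :\: S) w z)) hc; first exact: connect0.
  move=> y z hy _ hyY hzY hyz.
  have hyS : y \in X :\: S := econ_mem hw hy.
  have hzS : z \in X :\: S.
    move: hzY; rewrite !inE negb_and negbK => /andP [/orP [/eqP hzs|->] ->] //.
    subst z; case/negP: H; apply/existsP; exists y; rewrite hy /=.
    by rewrite esym.
  apply: connect_trans hy (connect1 _).
  by rewrite /rin hyS hzS hyz.
have := hmin (S :\ s); rewrite subDset subsetU ?hSX ?orbT //.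
have hwS : w \notin S by move: hw; rewrite inE => /andP [].
rewrite !inE negb_and hwS negb_and hw' !orbT => /(_ isT isT isT hS').
by rewrite (cardsD1 s S) hs add1n ltnn.
Qed.

Lemma conn_in (Y : {set T}) w a b : w \in Y -> econ Y w a -> econ Y w b ->
  econ [set y | econ Y w y] a b.
Proof.
move=> hw ha hb.
have hab : econ Y a b := connect_trans (etrans (econ_sym Y a w) ha) hb.
apply: (econ_ind (P := fun z => econ [set y | econ Y w y] a z)) hab; first exact: connect0.
move=> y z hy hay hyY hzY hyz.
apply: connect_trans hy (connect1 _).
have hwy : econ Y w y := connect_trans ha hay.
have hwz : econ Y w z.
  by apply: connect_trans hwy (connect1 _); rewrite /rin hyY hzY hyz.
by rewrite /rin !inE hwy hwz hyz.
Qed.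

Lemma min_sep (X : {set T}) u v : u \in X -> v \in X -> u != v -> ~~ e u v ->
  exists S A B, [/\ Sep X S A B, u \in A, v \in B & forall y, (y \in A) = econ (X :\: S) u y].
Proof.
move=> huX hvX huv nuv.
pose P := fun S : {set T} => [&& S \subset X, u \notin S, v \notin S & ~~ econ (X :\: S) u v].
pose S0 := X :\: [set u; v].
have P0 : P S0.
  rewrite /P /S0 subsetDl !inE !eqxx /= orbT /=.
  apply/negP => hc.
  have : v = u; last by move=> hvu; rewrite hvu eqxx in huv.
  apply: (econ_ind (P := fun z => z = u)) hc => // y z -> _ _ hz huz.
  move: hz; rewrite !inE => /andP [H1 hzX]; move: H1.
  rewrite hzX andbT negbK => /orP [/eqP // | /eqP hzv].
  by subst z; rewrite huz in nuv.
case: (@arg_minnP _ S0 P (fun S : {set T} => #|S|) P0) => S hPS hmin.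
case/and4P: hPS => hSX huS hvS hnc.
pose Y := X :\: S.
have huY : u \in Y by rewrite inE huS.
have hvY : v \in Y by rewrite inE hvS.
pose A := [set y | econ Y u y].
pose B := [set y | econ Y v y].
have hminu : forall S' : {set T}, S' \subset X -> u \notin S' -> v \notin S' ->
    ~~ econ (X :\: S') u v -> #|S| <= #|S'|.
  by move=> S' h1 h2 h3 h4; apply: hmin; rewrite /P h1 h2 h3 h4.
have hminv : forall S' : {set T}, S' \subset X -> v \notin S' -> u \notin S' ->
    ~~ econ (X :\: S') v u -> #|S| <= #|S'|.
  by move=> S' h1 h2 h3 h4; apply: hmin; rewrite /P h1 h2 h3 econ_sym h4.
have hncv : ~~ econ Y v u by rewrite econ_sym.
exists S, A, B; rewrite /A /B; split;
  [| by rewrite inE; exact: connect0 | by rewrite inE; exact: connect0 | by move=> y; rewrite inE].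
split => //.
- by apply/subsetP => y; rewrite inE => /(econ_mem huY).
- by apply/subsetP => y; rewrite inE => /(econ_mem hvY).
- rewrite disjoints_subset; apply/subsetP => y; rewrite !inE => hy1; apply/negP => hy2.
  case/negP: hnc; apply: connect_trans hy1 _.
  by rewrite -/(econ Y y v) econ_sym.
- move=> a y; rewrite !inE => ha hyX hay.
  case: (boolP (y \in S)) => hyS; rewrite ?orbT //.
  apply/orP; left; apply: (connect_trans ha (connect1 _)).
  by rewrite /rin (econ_mem huY ha) inE hyS hyX hay.
- move=> a y; rewrite !inE => ha hyX hay.
  case: (boolP (y \in S)) => hyS; rewrite ?orbT //.
  apply/orP; left; apply: (connect_trans ha (connect1 _)).
  by rewrite /rin (econ_mem hvY ha) inE hyS hyX hay.
- by move=> a b; rewrite !inE => ha hb; apply: conn_in.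
- by move=> a b; rewrite !inE => ha hb; apply: conn_in.
- move=> s hs; have [a ha hsa] := full_helper hSX huY hnc hminu hvS hs.
  by exists a; rewrite ?inE.
- move=> s hs; have [a ha hsa] := full_helper hSX hvY hncv hminv huS hs.
  by exists a; rewrite ?inE.
- by exists u; rewrite inE; exact: connect0.
Qed.

Definition good (X : {set T}) x := [/\ x \in X,
  (forall y z, y \in nb X x -> z \in nb X x -> y != z -> e y z) &
  (forall y z, y \in nb X x -> z \in nb X x -> (cn X y \subset cn X z) || (cn X z \subset cn X y))].

Lemma in_nb X u w : (w \in nb X u) = (w \in X) && e u w.
Proof. by rewrite inE. Qed.
Lemma in_cn X u w : (w \in cn X u) = (w == u) || (w \in X) && e u w.
Proof. by rewrite !inE. Qed.

Lemma base_good X S A B x : Sep X S A B ->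
  (forall y z, y \in A :|: S -> z \in A :|: S -> y != z -> e y z) -> x \in A -> good X x.
Proof.
move=> hs hcl hx.
case/andP: (sepA_in hs hx) => hxX hxS.
have hASX : forall w, w \in A :|: S -> w \in X.
  move=> w; rewrite inE => /orP [/(sepA_in hs) /andP [] //|].
  exact: (subsetP (sepSX hs)).
have nbx : forall y, y \in nb X x -> y \in A :|: S.
  by move=> y; rewrite in_nb => /andP [hyX hxy]; apply: (sepAcl hs hx hyX hxy).
have hxAS : x \in A :|: S by rewrite inE hx.
have F1 : forall y, y \in A -> cn X y \subset A :|: S.
  move=> y hy; apply/subsetP => w; rewrite in_cn => /orP [/eqP ->|/andP [hwX hyw]].
    by rewrite inE hy.
  exact: (sepAcl hs hy hwX hyw).
have F2 : forall z, z \in A :|: S -> A :|: S \subset cn X z.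
  move=> z hz; apply/subsetP => w hw; rewrite in_cn.
  case: (boolP (w == z)) => //= hwz; rewrite hASX //=.
  by apply: hcl; rewrite // eq_sym.
split => //.
- move=> y z hy hz hyz; apply: hcl => //; exact: nbx.
move=> y z hy hz.
have hyAS := nbx _ hy; have hzAS := nbx _ hz.
case: (boolP (y \in A)) => hyA.
  by rewrite (subset_trans (F1 _ hyA) (F2 _ hzAS)).
case: (boolP (z \in A)) => hzA.
  by rewrite (subset_trans (F1 _ hzA) (F2 _ hyAS)) orbT.
have hyS : y \in S by move: hyAS; rewrite inE (negbTE hyA).
have hzS : z \in S by move: hzAS; rewrite inE (negbTE hzA).
case: (boolP (y == z)) => [/eqP ->|hyz]; first by rewrite subxx.
case: (boolP (cn X y \subset cn X z)) => //= h1.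
case: (boolP (cn X z \subset cn X y)) => //= h2.
exfalso.
case/subsetPn: h1 => p hp1 hp2.
case/subsetPn: h2 => q hq1 hq2.
have hyX := hASX _ hyAS; have hzX := hASX _ hzAS.
have hycz : y \in cn X z := subsetP (F2 _ hzAS) _ hyAS.
have hzcy : z \in cn X y := subsetP (F2 _ hyAS) _ hzAS.
have [hpX hyp] : (p \in X) /\ e y p.
  move: hp1; rewrite in_cn => /orP [/eqP hpy|/andP [] //].
  by rewrite hpy hycz in hp2.
have [hqX hzq] : (q \in X) /\ e z q.
  move: hq1; rewrite in_cn => /orP [/eqP hqz|/andP [] //].
  by rewrite hqz hzcy in hq2.
have hpAS : p \notin A :|: S by apply: contraNN hp2; apply: (subsetP (F2 _ hzAS)).
have hqAS : q \notin A :|: S by apply: contraNN hq2; apply: (subsetP (F2 _ hyAS)).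
have nzp : ~~ e z p by move: hp2; rewrite in_cn hpX /= negb_or => /andP [].
have nyq : ~~ e y q by move: hq2; rewrite in_cn hqX /= negb_or => /andP [].
have [r hrB /andP [hyr hzr]] := sep_common hs hyS hzS hyz.
have hrAS : r \notin A :|: S.
  case/andP: (sepB_in hs hrB) => _ hrS.
  by rewrite inE negb_or hrS (disjointFl (sepAB hs) hrB).
have hrX : r \in X by case/andP: (sepB_in hs hrB).
have hxy : e x y by move: hy; rewrite in_nb => /andP [].
have hxz : e x z by move: hz; rewrite in_nb => /andP [].
have nxp : ~~ e x p by apply: contraNN hpAS; apply: (sepAcl hs hx hpX).
have nxq : ~~ e x q by apply: contraNN hqAS; apply: (sepAcl hs hx hqX).
have nxr : ~~ e x r by apply: (sep_noAB hs hx hrB).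
have dxp : x != p by apply: contraNneq hpAS => <-.
have dxq : x != q by apply: contraNneq hqAS => <-.
have dxr : x != r by apply: contraNneq hrAS => <-.
have hrcz : r \in cn X z by rewrite in_cn hrX hzr orbT.
have hrcy : r \in cn X y by rewrite in_cn hrX hyr orbT.
have dpr : p != r by apply: contraNneq hp2 => ->.
have dqr : q != r by apply: contraNneq hq2 => ->.
have hpr : e p r.
  apply/negPn/negP => npr.
  apply: (@no_claw y x p r) => //; by rewrite esym.
have hqr : e q r.
  apply/negPn/negP => nqr.
  apply: (@no_claw z x q r) => //; by rewrite esym.
have nqp : ~~ e q p.
  apply/negP => hqp.
  have dyq : y != q by apply: contraNneq hqAS => <-.
  have dpz : p != z by apply: contraNneq hpAS => ->.
  apply: (@no_c4 y p q z) => //; try by rewrite esym.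
  by apply: (hcl z y) => //; rewrite eq_sym.
apply: (@no_tent y z r x q p) => //; try by rewrite esym.
all: try by apply: hcl.
all: try by rewrite esym.
Qed.

Lemma k8 (X : {set T}) : forall n (S A B : {set T}), #|A| <= n -> Sep X S A B -> exists2 x, x \in A & good X x.
Proof.
elim=> [|n IH] S A B hA hs.
  case: (sepA0 hs) => a ha.
  by move: hA; rewrite leqn0 => /eqP /cards0_eq hA0; rewrite hA0 inE in ha.
pose W := [exists u, exists v, [&& u \in A, v \in A :|: S, u != v, ~~ e u v &
   [forall s, (s \in S) ==> (s == v) || e v s]]].
have [H|H] := boolP W.
- case/existsP: H => u /existsP [v /and5P [hu hv huv nuv hvS]].
  have hAX : forall w, w \in A -> w \in X by move=> w /(sepA_in hs) /andP [].
  have hvX : v \in X.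
    move: hv; rewrite inE => /orP [/hAX //|]; exact: (subsetP (sepSX hs)).
  have [S' [A' [B' [hs' huA' hvB' hA'E]]]] := min_sep (hAX _ hu) hvX huv nuv.
  have hvA' : v \notin A' by rewrite (disjointFl (sepAB hs') hvB').
  have hvS' : v \in X :\: S' := subsetP (sepBX hs') _ hvB'.
  have hsub : A' \subset A.
    apply/subsetP => y; rewrite hA'E.
    apply: (econ_ind (P := fun z => z \in A)) => // y0 z hy0 huy0 hy0Y hzY hyz.
    move: (hzY); rewrite inE => /andP [hzS' hzX].
    have := sepAcl hs hy0 hzX hyz; rewrite inE => /orP [//|hzS].
    have huz : econ (X :\: S') u z.
      by apply: (connect_trans huy0 (connect1 _)); rewrite /rin hy0Y hzY hyz.
    move/forallP: hvS => /(_ z); rewrite hzS /= => /orP [/eqP hzv|hvz].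
      by move: hvA'; rewrite hA'E -hzv huz.
    have : econ (X :\: S') u v.
      by apply: (connect_trans huz (connect1 _)); rewrite /rin hzY hvS' esym hvz.
    by rewrite -hA'E (negbTE hvA').
  have hprop : A' \proper A.
    rewrite properE hsub /=; apply/subsetPn.
    move: hv; rewrite inE => /orP [hvA|hvS0].
      by exists v.
    have [a ha hva] := sepSA hs hvS0.
    exists a => //; apply/negP => haA'.
    have := sepAcl hs' haA' hvX; rewrite esym hva => /(_ isT).
    rewrite inE (negbTE hvA') /=.
    by move: hvS'; rewrite inE => /andP [/negbTE ->].
  have hcard := proper_card hprop.
  have hA'n : #|A'| <= n by move: hcard hA; clear; lia.
  have [x hxA' hgx] := IH S' A' B' hA'n hs'.
  by exists x => //; apply: (subsetP hsub).
- case: (sepA0 hs) => a ha.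
  exists a => //; apply: (base_good hs) => //.
  have nW : forall u v, u \in A -> v \in A :|: S -> u != v -> ~~ e u v ->
      (forall s, s \in S -> (s == v) || e v s) -> False.
    move=> u v hu hv huv nuv hvs; case/negP: H.
    apply/existsP; exists u; apply/existsP; exists v.
    rewrite hu hv huv nuv /=; apply/forallP => s; apply/implyP; exact: hvs.
  have hSc : forall s t, s \in S -> t \in S -> (s == t) || e t s.
    move=> s t hsS htS; case: (boolP (s == t)) => //= hst.
    by apply: (sep_clique hs) => //; rewrite eq_sym.
  have K : forall y z, y \in A -> z \in A :|: S -> y != z -> ~~ e y z -> False.
    move=> y z hy hz hyz nyz.
    move: (hz); rewrite inE => /orP [hzA|hzS].
    + case: (boolP [exists u, exists s, [&& u \in A, s \in S & ~~ e u s]]).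
      * case/existsP => u /existsP [s /and3P [hu hsS nus]].
        apply: (nW u s) => //.
        -- by rewrite inE hsS orbT.
        -- apply: contraNneq nus => hus.
           by case/andP: (sepA_in hs hu); rewrite hus hsS.
        -- by move=> s' hs'; apply: hSc.
      * move=> H2; apply: (nW y z) => // s hs0.
        apply/orP; right; apply/negPn/negP => nzs; case/negP: H2.
        apply/existsP; exists z; apply/existsP; exists s.
        by rewrite hzA hs0 nzs.
    + apply: (nW y z) => // s hs0; exact: hSc.
  move=> y z hy hz hyz; apply/negPn/negP => nyz.
  case: (boolP (y \in A)) => hyA.
    exact: (K y z).
  case: (boolP (z \in A)) => hzA.
    apply: (K z y) => //; by [rewrite eq_sym | rewrite esym].
  have hyS : y \in S by move: hy; rewrite inE (negbTE hyA).
  have hzS : z \in S by move: hz; rewrite inE (negbTE hzA).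
  by rewrite (sep_clique hs hyS hzS hyz) in nyz.
Qed.

Lemma exists_good (X : {set T}) : X != set0 -> exists x, good X x.
Proof.
move=> hX.
case: (boolP [exists u, exists v, [&& u \in X, v \in X, u != v & ~~ e u v]]).
- case/existsP => u /existsP [v /and4P [hu hv huv nuv]].
  have [S [A [B [hs huA _ _]]]] := min_sep hu hv huv nuv.
  have [x _ hx] := k8 (leqnn _) hs.
  by exists x.
- move=> H.
  have hcl : forall y z, y \in X -> z \in X -> y != z -> e y z.
    move=> y z hy hz hyz; apply/negPn/negP => nyz; case/negP: H.
    by apply/existsP; exists y; apply/existsP; exists z; rewrite hy hz hyz nyz.
  case/set0Pn: hX => x hx; exists x.
  have hcnX : forall y, y \in X -> cn X y = X.
    move=> y hy; apply/setP => w; rewrite in_cn.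
    case: (boolP (w == y)) => [/eqP ->|hwy] //=.
    case: (boolP (w \in X)) => //= hw; apply: hcl => //; by rewrite eq_sym.
  split => //.
  + move=> y z; rewrite !in_nb => /andP [hy _] /andP [hz _]; exact: hcl.
  + move=> y z; rewrite !in_nb => /andP [hy _] /andP [hz _].
    by rewrite !hcnX // subxx.
Qed.

Lemma good_cn X x y : good X x -> y \in cn X x -> cn X x \subset cn X y.
Proof.
case=> hxX hsimp _ hy; apply/subsetP => w hw.
move: hy; rewrite in_cn => /orP [/eqP -> //|/andP [hyX hxy]].
move: hw; rewrite !in_cn => /orP [/eqP ->|/andP [hwX hxw]].
  by rewrite hxX esym hxy orbT.
case: (boolP (w == y)) => //= hwy; rewrite hwX /=.
by apply: hsimp; rewrite ?in_nb ?hyX ?hwX // eq_sym.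
Qed.

Lemma twin_good X x u : good X x -> u \in X -> cn X u = cn X x -> good X u.
Proof.
move=> hg hu hcn; have hg' := hg; case: hg' => hxX hsimp hch'.
have nbu : forall y, y \in nb X u -> (y == x) || (y \in nb X x).
  move=> y; rewrite in_nb => /andP [hyX huy].
  have : y \in cn X u by rewrite in_cn hyX huy orbT.
  by rewrite hcn in_cn in_nb.
have hxnb : forall z, z \in nb X x -> x \in cn X x -> cn X x \subset cn X z.
  move=> z hz _; apply: (good_cn hg); by rewrite inE hz orbT.
split => //.
- move=> y z hy hz hyz.
  case/orP: (nbu _ hy) => [/eqP hyx|hy'].
    case/orP: (nbu _ hz) => [/eqP hzx|hz'].
      by rewrite hyx hzx eqxx in hyz.
    by move: hz'; rewrite in_nb hyx => /andP [].
  case/orP: (nbu _ hz) => [/eqP hzx|hz'].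
    by move: hy'; rewrite in_nb hzx esym => /andP [].
  exact: hsimp.
- move=> y z hy hz.
  case/orP: (nbu _ hy) => [/eqP hyx|hy'].
    case/orP: (nbu _ hz) => [/eqP hzx|hz'].
      by rewrite hyx hzx subxx.
    by rewrite hyx hxnb // in_cn eqxx.
  case/orP: (nbu _ hz) => [/eqP hzx|hz'].
    by rewrite hzx hxnb ?orbT // in_cn eqxx.
  exact: hch'.
Qed.

Definition validR (X : {set T}) (R : rel T) :=
 [/\ (forall u, u \in X -> ~~ R u u),
     (forall u v w, u \in X -> v \in X -> w \in X -> R u v -> R v w -> R u w) &
     (forall u w, u \in X -> w \in X -> R u w -> cn X u \subset cn X w)].

Lemma choose_x X R : X != set0 -> validR X R ->
  exists x, good X x /\ forall v, v \in X -> ~~ R v x.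
Proof.
move=> hX [hirr htr hcomp].
have [x0 hg0] := exists_good hX.
have hx0X : x0 \in X by case: hg0.
pose Tw := [set u in X | cn X u == cn X x0].
pose pr := fun u => [set v in Tw | R v u].
have hx0T : x0 \in Tw by rewrite inE hx0X eqxx.
case: (@arg_minnP _ x0 (fun u => u \in Tw) (fun u => #|pr u|) hx0T) => u huT hmin.
move: (huT); rewrite inE => /andP [huX /eqP hcnu].
have hgu := twin_good hg0 huX hcnu.
exists u; split => // v hvX; apply/negP => hvu.
have hvcn : v \in cn X u.
  apply: (subsetP (hcomp _ _ hvX huX hvu)); by rewrite in_cn eqxx.
have hvT : v \in Tw.
  rewrite inE hvX /= -hcnu; apply/eqP/eqP; rewrite eqEsubset (hcomp _ _ hvX huX hvu) /=.
  exact: good_cn hgu hvcn.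
have := hmin v hvT.
have : pr v \proper pr u.
  rewrite properE; apply/andP; split.
    apply/subsetP => w; rewrite !inE => /andP [/andP [hwX hw2] hwv].
    by rewrite hwX hw2 (htr w v u).
  apply/subsetPn; exists v; first by rewrite inE hvT hvu.
  by rewrite inE (negbTE (hirr v hvX)) andbF.
move=> /proper_card; rewrite ltnNge => /negP; exact.
Qed.

Definition strongX (X : {set T}) (s : seq T) :=
  [/\ uniq s, (forall v, (v \in s) = (v \in X)),
   (forall vi vj vk, vi \in X -> vj \in X -> vk \in X -> index vi s < index vj s ->
      index vi s < index vk s -> e vi vj -> e vi vk -> vj != vk -> e vj vk) &
   (forall vi vj vk vl, vi \in X -> vj \in X -> vk \in X -> vl \in X ->
      index vi s < index vk s -> index vk s < index vl s -> index vi s < index vj s ->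
      e vi vk -> e vk vj -> e vi vl -> vj != vl -> e vj vl)].

Lemma idx_cons (x : T) (s : seq T) (v : T) : v != x -> index v (x :: s) = (index v s).+1.
Proof. by move=> h; rewrite /= eq_sym (negbTE h). Qed.

Lemma cn_restr X x a b : a \in X :\ x -> b \in X :\ x ->
  cn X a \subset cn X b -> cn (X :\ x) a \subset cn (X :\ x) b.
Proof.
move=> ha hb hs; apply/subsetP => w; rewrite !in_cn => /orP [/eqP ->|/andP [hw haw]].
  have : a \in cn X b by apply: (subsetP hs); rewrite in_cn eqxx.
  rewrite in_cn => /orP [->//|/andP [_ ->]]; by rewrite ha orbT.
have : w \in cn X a by move: hw; rewrite !inE => /andP [_ ->]; rewrite haw orbT.
move/(subsetP hs); rewrite in_cn => /orP [->//|/andP [_ ->]]; by rewrite hw orbT.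
Qed.

Lemma ord_main n : forall (X : {set T}) R, #|X| <= n -> validR X R ->
  exists s, strongX X s /\ (forall u w, u \in X -> w \in X -> R u w -> index u s < index w s).
Proof.
elim: n => [|n IH] X R hXn hR.
  exists [::]; split; last by move=> u w; move: hXn; rewrite leqn0 => /eqP /cards0_eq ->; rewrite inE.
  move: hXn; rewrite leqn0 => /eqP /cards0_eq ->.
  by split => // *; rewrite inE.
case: (boolP (X == set0)) => [/eqP ->|hX].
  exists [::]; split; last by move=> u w; rewrite inE.
  by split => // *; rewrite inE.
have [x [hgx hnopred]] := choose_x hX hR.
have hgx' := hgx; case: hgx' => hxX hsimp hchain.
case: hR => hirr htr hcomp.
pose X' := X :\ x.
have hX'X : forall v, v \in X' -> v \in X by move=> v; rewrite /X' !inE => /andP [].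
have hX'x : forall v, v \in X' -> v != x by move=> v; rewrite /X' !inE => /andP [].
have hXX' : forall v, v \in X -> v != x -> v \in X' by move=> v hv hvx; rewrite /X' !inE hv hvx.
pose R' := fun a b => R a b || (cn X' a \proper cn X' b).
have hR' : validR X' R'.
  split.
  - move=> u hu; rewrite /R' negb_or hirr ?hX'X //=.
    by rewrite properE subxx.
  - move=> u v w hu hv hw; rewrite /R' => /orP [h1|h1] /orP [h2|h2].
    + by rewrite (htr u v w) ?hX'X.
    + apply/orP; right; apply: (sub_proper_trans _ h2).
      by apply: cn_restr => //; apply: hcomp; rewrite ?hX'X.
    + apply/orP; right; apply: (proper_sub_trans h1).
      by apply: cn_restr => //; apply: hcomp; rewrite ?hX'X.
    + by apply/orP; right; apply: (proper_trans h1 h2).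
  - move=> u w hu hw; rewrite /R' => /orP [h|h].
    + by apply: cn_restr => //; apply: hcomp; rewrite ?hX'X.
    + exact: proper_sub.
have hX'n : #|X'| <= n.
  have := cardsD1 x X; rewrite hxX add1n => hc.
  by move: hXn; rewrite hc ltnS.
have [s' [[hu' hmem' hpeo' hsc'] hresp']] := IH X' R' hX'n hR'.
have idx0 : index x (x :: s') = 0 by rewrite /= eqxx.
have notx : forall v w, index v (x :: s') < index w (x :: s') -> w != x.
  by move=> v w; apply: contraTneq => ->; rewrite idx0 ltn0.
exists (x :: s'); split.
- split.
  + by rewrite /= hu' andbT hmem' /X' !inE eqxx.
  + move=> v; rewrite in_cons hmem' /X' !inE.
    by case: (boolP (v == x)) => [/eqP ->|] //=; rewrite hxX.
  + move=> vi vj vk hi hj hk hij hik eij eik njk.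
    case: (boolP (vi == x)) => [/eqP hix|hix].
      by subst vi; apply: hsimp; rewrite ?in_nb ?hj ?hk.
    have hjx := notx _ _ hij; have hkx := notx _ _ hik.
    move: hij hik; rewrite !idx_cons // !ltnS => hij hik.
    by apply: (hpeo' vi) => //; apply: hXX'.
  + move=> vi vj vk vl hi hj hk hl hik hkl hij eik ekj eil njl.
    have hkx := notx _ _ hik; have hlx := notx _ _ hkl; have hjx := notx _ _ hij.
    case: (boolP (vi == x)) => [/eqP hix|hix].
      subst vi.
      move: hkl; rewrite !idx_cons // ltnS => hkl.
      have hkn : vk \in nb X x by rewrite in_nb hk eik.
      have hln : vl \in nb X x by rewrite in_nb hl eil.
      have hk' := hXX' _ hk hkx; have hl' := hXX' _ hl hlx; have hj' := hXX' _ hj hjx.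
      have hjk : vj \in cn X' vk by rewrite in_cn hj' ekj orbT.
      suff hsub : cn X' vk \subset cn X' vl.
        move: (subsetP hsub _ hjk); rewrite in_cn => /orP [/eqP hjl|/andP [_ hlj]].
          by rewrite hjl eqxx in njl.
        by rewrite esym.
      case/orP: (hchain vk vl hkn hln) => h.
        exact: cn_restr.
      case: (boolP (cn X' vl \proper cn X' vk)) => hp.
        have : index vl s' < index vk s' by apply: hresp' => //; rewrite /R' hp orbT.
        by rewrite ltnNge (ltnW hkl).
      by move: hp; rewrite properE (cn_restr hl' hk' h) /= negbK.
    move: hik hkl hij; rewrite !idx_cons // !ltnS => hik hkl hij.
    by apply: (hsc' vi vj vk vl) => //; apply: hXX'.
- move=> u w hu hw huw.
  case: (boolP (u == x)) => [/eqP hux|hux].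
    subst u; have hwx : w != x by apply: contraTneq huw => ->; rewrite (negbTE (hirr x hxX)).
    by rewrite idx0 idx_cons.
  case: (boolP (w == x)) => [/eqP hwx|hwx].
    by subst w; move: (hnopred u hu); rewrite huw.
  rewrite !idx_cons // ltnS; apply: hresp'; rewrite ?hXX' //.
  by rewrite /R' huw.
Qed.


Lemma hard : strongly_chordal e.
Proof.
have hR : validR setT (fun _ _ => false) by split.
have [s [[hu hmem hpeo hsc] _]] := ord_main (leqnn _) hR.
exists s; split; first split.
- by split => // v; rewrite hmem inE.
- by move=> vi vj vk; apply: hpeo; rewrite inE.
- by move=> vi vj vk vl; apply: hsc; rewrite inE.
Qed.

End G.

Theorem corollary2p3 (T : finType) (e : rel T) :
  simple_graph e ->
  ((chordal e /\ free_of claw_rel e /\ free_of tent_rel e) <->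
   (strongly_chordal e /\ free_of claw_rel e)).
Proof.
move=> [hs hi]; split.
- move=> [hch [hcl ht]]; split => //; exact: hard hs hi hch hcl ht.
- move=> [[s hstr] hcl]; split; [|split] => //.
  + by apply: (@strong_chordal _ _ s); case: hstr.
  + exact: strong_tentfree hstr.
Qed.
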